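(* Let $G$ be a finite non-abelian group. If there is a prime $p$ such that $G/Z(G)\cong C_p\times C_p$, then $G$ is induced regular.
   Context: For a finite group $G$, $C_G(x)$ denotes the centralizer of $x\in G$ and $Z(G)$ the center. The non-centralizer graph $\Upsilon_G$ is the simple graph with vertex set $G$ in which two distinct vertices $x,y$ are adjacent iff $C_G(x)\neq C_G(y)$; the induced non-centralizer graph $\Upsilon_{G\setminus Z(G)}$ is its induced subgraph on $G\setminus Z(G)$. $G$ is called induced regular if $\Upsilon_{G\setminus Z(G)}$ is a regular graph (all vertices have the same degree). *)

(* Defs.v *)
From mathcomp Require Import all_boot all_fingroup all_algebra all_solvable.
Set Implicit Arguments. Unset Strict Implicit. Unset Printing Implicit Defensive.
Local Open Scope group_scope.

Definition nc_adj (gT : finGroupType) (G : {group gT}) (x y : gT) : bool :=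
  (x != y) && ('C_G[x] != 'C_G[y]).

Definition induced_nc_degree (gT : finGroupType) (G : {group gT}) (x : gT) : nat :=
  #|[set y in G :\: 'Z(G) | nc_adj G x y]|.

Definition induced_regular (gT : finGroupType) (G : {group gT}) : Prop :=
  forall x y, x \in G :\: 'Z(G) -> y \in G :\: 'Z(G) ->
    induced_nc_degree G x = induced_nc_degree G y.

(* Main.v *)
Require Import Defs.
From mathcomp Require Import all_boot all_fingroup all_algebra all_solvable.
Local Open Scope group_scope.

Section Aux.
Variables (gT : finGroupType) (G Z : {group gT}) (p : nat).
Hypotheses (pr : prime p) (sZG : Z \subset G) (iZ : #|G : Z| = (p ^ 2)%N).

Lemma mid_index (H : {group gT}) : Z \proper H -> H \proper G -> #|H : Z| = p.
Proof.
move=> /andP[sZH nHZ] /andP[sHG nGH].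
have := Lagrange_index sHG sZH; rewrite iZ => e.
have : #|H : Z| %| p ^ 2 by rewrite -e dvdn_mull.
move/(dvdn_pfactor _ _ pr) => -[m hm1 hm]; case: m hm1 hm => [|[|[|m]]] //= _ hm.
- by case/negP: nHZ; rewrite -indexg_eq1 hm.
- move: e; rewrite hm => e.
  have : #|G : H| = 1%N.
    have p2 : 0 < p ^ 2 by rewrite expn_gt0 prime_gt0.
    by apply/eqP; rewrite -(eqn_pmul2r p2) mul1n e.
  by move/eqP; rewrite indexg_eq1 => sGH; case/negP: nGH.
Qed.

Lemma mid_card (H : {group gT}) : Z \proper H -> H \proper G -> #|H| = (#|Z| * p)%N.
Proof.
move=> pZH pHG; rewrite -(mid_index _ pZH pHG) Lagrange //.
by case/andP: pZH.
Qed.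

Lemma mid_eq (H K : {group gT}) : Z \proper H -> H \subset K -> K \proper G -> H :=: K.
Proof.
move=> pZH sHK pKG.
have pHG : H \proper G by apply: sub_proper_trans sHK pKG.
have pZK : Z \proper K by apply: proper_sub_trans pZH sHK.
apply/eqP; rewrite eqEcard sHK (mid_card _ pZH pHG) (mid_card _ pZK pKG).
by rewrite /= leqnn.
Qed.
End Aux.

Theorem proposition3p8 (gT : finGroupType) (G : {group gT}) :
  ~~ abelian G ->
  (exists p : nat, prime p /\ (G / 'Z(G))%g \isog [set: 'Z_p * 'Z_p]%g) ->
  induced_regular G.
Proof.
move=> _ [p [pr iso]].
have sZG : 'Z(G) \subset G := center_sub G.
have iZ : #|G : 'Z(G)| = (p ^ 2)%N.
  rewrite -card_quotient; last by rewrite normal_norm ?center_normal.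
  rewrite (card_isog iso) cardsT card_prod card_ord Zp_cast ?prime_gt1 //.
have pC : forall x, x \in G :\: 'Z(G) ->
    'Z(G) \proper 'C_G[x] /\ 'C_G[x] \proper G.
  move=> x /setDP[xG xZ]; split.
    rewrite properE; apply/andP; split.
      rewrite subsetI sZG /= sub_cent1; apply: (subsetP _ x xG).
      by rewrite centsC; apply: subsetIr.
    by apply/subsetPn; exists x => //; rewrite inE xG cent1id.
  rewrite properE subsetIl /=; apply/negP => sGC.
  case/negP: xZ; apply/centerP; split => // y yG.
  have := subsetP sGC y yG; rewrite in_setI => /andP[_ /cent1P h].
  exact: esym h.
have eqC : forall x y, x \in G :\: 'Z(G) -> y \in G :\: 'Z(G) ->
    y \in 'C_G[x] -> 'C_G[x] = 'C_G[y].
  move=> x y Hx Hy yC.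
  have [pZx pxG] := pC x Hx; have [pZy pyG] := pC y Hy.
  have xC : x \in 'C_G[y].
    move: yC; rewrite !in_setI => /andP[yG]; rewrite cent1C => ->.
    by case/setDP: Hx => ->.
  have pZI : 'Z(G) \proper ('C_G[x] :&: 'C_G[y])%G.
    rewrite properE subsetI (proper_sub pZx) (proper_sub pZy) /=.
    apply/subsetPn; exists x; first by rewrite inE xC andbT in_setI cent1id; case/setDP: Hx => ->.
    by case/setDP: Hx.
  have e1 := @mid_eq _ _ _ _ pr iZ _ _ pZI (subsetIl _ _) pxG.
  have e2 := @mid_eq _ _ _ _ pr iZ _ _ pZI (subsetIr _ _) pyG.
  by rewrite -e1 -e2.
have degE : forall x, x \in G :\: 'Z(G) ->
    induced_nc_degree G x = (#|G| - #|'Z(G)| * p)%N.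
  move=> x Hx; have [pZx pxG] := pC x Hx.
  rewrite /induced_nc_degree.
  have -> : [set y in G :\: 'Z(G) | nc_adj G x y] = G :\: 'C_G[x].
    apply/setP => y; rewrite [RHS]inE [LHS]inE.
    case Hy: (y \in G :\: 'Z(G)) => /=.
      rewrite /nc_adj; case yC: (y \in 'C_G[x]) => /=.
        by rewrite (eqC x y Hx Hy yC) eqxx andbF.
      have -> : 'C_G[x] != 'C_G[y].
        apply/eqP => E; move/negbT: yC; rewrite E in_setI cent1id andbT.
        by case/setDP: Hy => ->.
      have yG : y \in G by case/setDP: Hy.
      rewrite andbT yG; apply/eqP => E; move/negbT: yC; rewrite -E in_setI cent1id andbT.
      by case/setDP: Hx => ->.
    move: Hy; rewrite inE => /negbT; rewrite negb_and negbK.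
    case/orP => [yZ|yG]; last by rewrite (negbTE yG) andbF.
    by rewrite (subsetP (proper_sub pZx)).
  rewrite cardsD (setIidPr (subsetIl _ _)).
  by rewrite (@mid_card _ _ _ _ pr iZ _ pZx pxG).
by move=> x y Hx Hy; rewrite !degE.
Qed.
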